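(* Let $A,B\in\mathbb{R}^{n\times n}$ be symmetric matrices. Suppose $Q(A)\cap Q(B)=N(A)\cap N(B)$ and $\dim\{N(A)\cap N(B)\}\le n-3$. Let $U$ be a matrix whose columns form a basis of the orthogonal complement of $N(A)\cap N(B)$. Then (a') $II_{\succ}(U^TAU,U^TBU)\neq\emptyset$; (b') $II_{\succeq}(A,B)\neq\emptyset$; (c') $A$ and $B$ are simultaneously diagonalizable via congruence.
   Context: For symmetric matrices $A,B$ of the same size: $II_{\succ}(A,B)=\{(\mu,\sigma)\in\mathbb{R}^2: \mu A+\sigma B\succ 0\}$ (positive definite), $II_{\succeq}(A,B)=\{(\mu,\sigma)\in\mathbb{R}^2: \mu A+\sigma B\succeq 0\}$ (positive semidefinite), $Q(A)=\{v: v^TAv=0\}$, $N(A)=\{v: Av=0\}$. $A$ and $B$ are simultaneously diagonalizable via congruence if there is a nonsingular matrix $C$ such that both $C^TAC$ and $C^TBC$ are diagonal. *)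

(* Defs.v *)
From mathcomp Require Import all_boot all_order all_algebra.
From mathcomp Require Import reals.
Set Implicit Arguments. Unset Strict Implicit. Unset Printing Implicit Defensive.
Import Order.TTheory GRing.Theory Num.Theory.
Local Open Scope ring_scope.

Section Defs.
Variable R : realType.

Definition symmx n (A : 'M[R]_n) : Prop := A^T = A.

Definition posdef n (M : 'M[R]_n) : Prop :=
  M^T = M /\ forall v : 'cV[R]_n, v != 0 -> 0 < (v^T *m M *m v) 0 0.
Definition psd n (M : 'M[R]_n) : Prop :=
  M^T = M /\ forall v : 'cV[R]_n, 0 <= (v^T *m M *m v) 0 0.

Definition II_pd n (A B : 'M[R]_n) (p : R * R) : Prop := posdef (p.1 *: A + p.2 *: B).
Definition II_psd n (A B : 'M[R]_n) (p : R * R) : Prop := psd (p.1 *: A + p.2 *: B).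

Definition Qset n (A : 'M[R]_n) (v : 'cV[R]_n) : Prop := v^T *m A *m v = 0.
Definition Nset n (A : 'M[R]_n) (v : 'cV[R]_n) : Prop := A *m v = 0.

(* a matrix whose row space is {v^T : v in N(A) /\ v in N(B)};
   hence dim (N(A) cap N(B)) = \rank (NAB A B) *)
Definition NAB n (A B : 'M[R]_n) : 'M[R]_n := (kermx A^T :&: kermx B^T)%MS.

Definition sim_diag_congr n (A B : 'M[R]_n) : Prop :=
  exists C : 'M[R]_n, C \in unitmx /\
    is_diag_mx (C^T *m A *m C) /\ is_diag_mx (C^T *m B *m C).

End Defs.

(* Main.v *)
Require Import Defs.
From Stdlib Require Import Classical.
From mathcomp Require Import all_boot all_order all_algebra.
From mathcomp Require Import reals.
From mathcomp Require Import complex.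
From mathcomp Require Import classical_sets.
From mathcomp Require Import ring lra zify.
Set Implicit Arguments. Unset Strict Implicit. Unset Printing Implicit Defensive.
Import Order.TTheory GRing.Theory Num.Theory.
Local Open Scope ring_scope.

Section Base.
Variable R : realType.

Definition bf n (A : 'M[R]_n) (x y : 'cV[R]_n) : R := (x^T *m A *m y) 0 0.
Definition qf n (A : 'M[R]_n) (x : 'cV[R]_n) : R := bf A x x.

Lemma bf_sym n (A : 'M[R]_n) x y : A^T = A -> bf A x y = bf A y x.
Proof.
move=> sA; rewrite /bf -[in RHS]sA.
have -> : (x^T *m A *m y) 0 0 = ((x^T *m A *m y)^T) 0 0 by rewrite [in RHS]mxE.
by rewrite !trmx_mul trmxK mulmxA.
Qed.

Lemma bfDl n (A : 'M[R]_n) x y z : bf A (x + y) z = bf A x z + bf A y z.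
Proof. by rewrite /bf linearD /= !mulmxDl mxE. Qed.
Lemma bfDr n (A : 'M[R]_n) x y z : bf A z (x + y) = bf A z x + bf A z y.
Proof. by rewrite /bf !mulmxDr mxE. Qed.
Lemma bfZl n (A : 'M[R]_n) a x z : bf A (a *: x) z = a * bf A x z.
Proof. by rewrite /bf linearZ /= -!scalemxAl mxE. Qed.
Lemma bfZr n (A : 'M[R]_n) a x z : bf A z (a *: x) = a * bf A z x.
Proof. by rewrite /bf -!scalemxAr mxE. Qed.
Lemma bfNl n (A : 'M[R]_n) x z : bf A (- x) z = - bf A x z.
Proof. by rewrite -scaleN1r bfZl mulN1r. Qed.
Lemma bfNr n (A : 'M[R]_n) x z : bf A z (- x) = - bf A z x.
Proof. by rewrite -scaleN1r bfZr mulN1r. Qed.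
Lemma bf0l n (A : 'M[R]_n) z : bf A 0 z = 0.
Proof. by rewrite /bf trmx0 !mul0mx mxE. Qed.
Lemma bf0r n (A : 'M[R]_n) z : bf A z 0 = 0.
Proof. by rewrite /bf mulmx0 mxE. Qed.
Lemma bf_comb n (A B : 'M[R]_n) a b x y :
  bf (a *: A + b *: B) x y = a * bf A x y + b * bf B x y.
Proof. by rewrite /bf mulmxDr mulmxDl -!scalemxAr -!scalemxAl !mxE. Qed.
Lemma bf_mulr n (A : 'M[R]_n) x y : bf A x y = bf 1%:M x (A *m y).
Proof. by rewrite /bf mulmx1 mulmxA. Qed.
Lemma bf_kerr n (A : 'M[R]_n) x y : A *m y = 0 -> bf A x y = 0.
Proof. by move=> h; rewrite /bf -mulmxA h mulmx0 mxE. Qed.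
Lemma bf_kerl n (A : 'M[R]_n) x y : A^T = A -> A *m x = 0 -> bf A x y = 0.
Proof. by move=> sA h; rewrite bf_sym // bf_kerr. Qed.

Lemma norm2E n (x : 'cV[R]_n) : bf 1%:M x x = \sum_i x i 0 ^+ 2.
Proof. by rewrite /bf mulmx1 mxE; apply: eq_bigr => i _; rewrite mxE expr2. Qed.
Lemma norm2_ge0 n (x : 'cV[R]_n) : 0 <= bf 1%:M x x.
Proof. by rewrite norm2E sumr_ge0 // => i _; rewrite sqr_ge0. Qed.
Lemma norm2_eq0 n (x : 'cV[R]_n) : bf 1%:M x x = 0 -> x = 0.
Proof.
rewrite norm2E => /eqP; rewrite psumr_eq0 => [/allP h|i _]; last by rewrite sqr_ge0.
apply/matrixP => i j; rewrite ord1 mxE; apply/eqP; rewrite -sqrf_eq0.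
by apply: (implyP (h i (mem_index_enum _))).
Qed.

End Base.

Section Quad.
Variable R : realType.
Implicit Types (n : nat).

Lemma quad_coef0 (c d : R) : 0 <= d -> (forall t : R, 0 <= 2 * t * c + t ^+ 2 * d) -> c = 0.
Proof.
move=> d0 h; have e0 : 0 < d + 1 by lra.
have := h (- c / (d + 1)).
have -> : 2 * (- c / (d + 1)) * c + (- c / (d + 1)) ^+ 2 * d
   = - (c ^+ 2 * (d + 2)) / ((d + 1) ^+ 2).
  by field; rewrite gt_eqF.
rewrite mulNr oppr_ge0 pmulr_lle0 ?invr_gt0 ?exprn_gt0 // pmulr_lle0; last by lra.
by move=> h2; apply/eqP; rewrite -sqrf_eq0 eq_le h2 sqr_ge0.
Qed.

Lemma psd_ker n (P : 'M[R]_n) x : P^T = P -> (forall v, 0 <= qf P v) ->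
  qf P x = 0 -> P *m x = 0.
Proof.
move=> sP hP qx; apply: norm2_eq0.
have := @quad_coef0 (bf P (P *m x) x) (qf P (P *m x)) (hP _).
rewrite -bf_mulr => -> //.
move=> t; have := hP (x + t *: (P *m x)).
rewrite /qf !(bfDl, bfDr, bfZl, bfZr) -/(qf P x) qx (bf_sym x (P *m x) sP).
by rewrite /qf; move=> h; apply: le_trans h _; rewrite le_eqVlt; apply/orP; left; apply/eqP; ring.
Qed.

Lemma quad_path_ivt n (A : 'M[R]_n) (u0 u1 u2 : 'cV[R]_n) :
  qf A u0 * qf A (u0 + u1 + u2) <= 0 ->
  exists s : R, 0 <= s <= 1 /\ qf A (u0 + s *: u1 + s ^+ 2 *: u2) = 0.
Proof.
move=> h.
pose a0 := bf A u0 u0. pose a1 := bf A u0 u1 + bf A u1 u0.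
pose a2 := bf A u1 u1 + bf A u0 u2 + bf A u2 u0.
pose a3 := bf A u1 u2 + bf A u2 u1. pose a4 := bf A u2 u2.
pose p : {poly R} := a0%:P + a1%:P * 'X + a2%:P * 'X^2 + a3%:P * 'X^3 + a4%:P * 'X^4.
have pE s : p.[s] = qf A (u0 + s *: u1 + s ^+ 2 *: u2).
  rewrite /p !hornerD !hornerCM hornerC hornerX !hornerXn /qf !(bfDl, bfDr, bfZl, bfZr) /a0 /a1 /a2 /a3 /a4.
  ring.
have p0 : p.[0] = qf A u0 by rewrite pE scale0r expr0n /= scale0r !addr0.
have p1 : p.[1] = qf A (u0 + u1 + u2) by rewrite pE expr1n !scale1r.
rewrite -p0 -p1 in h.
have [e0|ne0] := eqVneq p.[0] 0.
  by exists 0; split; [rewrite lexx ler01 | rewrite -pE].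
have [lt0|gt0] := ltrP p.[0] 0.
  have h1 : 0 <= p.[1] by nra.
  have [s /andP[s0 s1] rs] := @poly_ivt R p 0 1 ler01 (introT andP (conj (ltW lt0) h1)).
  by exists s; split; [rewrite s0 s1 | rewrite -pE; apply/eqP].
have gt0' : 0 < p.[0] by rewrite lt_neqAle eq_sym ne0 gt0.
have h1 : p.[1] <= 0 by nra.
have q0 : (- p).[0] <= 0 by rewrite hornerN oppr_le0 ltW.
have q1 : 0 <= (- p).[1] by rewrite hornerN oppr_ge0.
have [s /andP[s0 s1] rs] := @poly_ivt R (- p) 0 1 ler01 (introT andP (conj q0 q1)).
exists s; split; first by rewrite s0 s1.
by rewrite -pE; apply/eqP; rewrite -oppr_eq0 -hornerN.
Qed.

End Quad.

Section H3.
Variable R : realType.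
Implicit Types (n : nat).

Lemma two_signs n (S : 'M[R]_n) x y : 0 < qf S x -> qf S y < 0 ->
  exists s : R, 0 <= s <= 1 /\ qf S (x + s *: (y - x)) = 0 /\ x + s *: (y - x) != 0.
Proof.
move=> hx hy.
have [|s [s01 hs]] := @quad_path_ivt R n S x (y - x) 0.
  by rewrite addr0 addrC subrK; nra.
rewrite scaler0 addr0 in hs.
exists s; split => //; split => //; apply/eqP => z0.
have hxs : (1 - s) *: x = - (s *: y).
  apply/matrixP => i j; move/matrixP: z0 => /(_ i j); rewrite !mxE => h; nra.
have := congr1 (qf S) hxs; rewrite /qf bfNl bfNr opprK !bfZl !bfZr -!/(qf _ _).
move=> e; case/andP: s01 => s0 s1.
have h1 : 0 <= (1 - s) * ((1 - s) * qf S x) by rewrite mulrA -expr2 mulr_ge0 ?sqr_ge0 ?ltW.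
have h2 : s * (s * qf S y) <= 0 by rewrite mulrA -expr2 mulr_ge0_le0 ?sqr_ge0 ?ltW.
have e1 : (1 - s) * ((1 - s) * qf S x) = 0 by lra.
have e2 : s * (s * qf S y) = 0 by lra.
have /eqP h3 : 1 - s == 0 by move/eqP: e1; rewrite !mulf_eq0 (gt_eqF hx) orbF orbb.
have /eqP h4 : s == 0 by move/eqP: e2; rewrite !mulf_eq0 (lt_eqF hy) orbF orbb.
lra.
Qed.

Lemma exists_orth2 n (a b : 'rV[R]_n) : (2 < n)%N ->
  exists w : 'cV[R]_n, w != 0 /\ a *m w = 0 /\ b *m w = 0.
Proof.
move=> n2; pose F := col_mx a b; pose K := kermx F^T.
have rK : (0 < \rank K)%N.
  rewrite /K mxrank_ker; have := rank_leq_col F^T.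
  by move=> h; rewrite subn_gt0; apply: leq_ltn_trans h n2.
have [i ri] : exists i, row i K != 0.
  apply/existsP; apply: contraLR rK; rewrite negb_exists => /forallP h.
  have -> : K = 0 by apply/row_matrixP => i; rewrite row0; apply/eqP; move: (h i); rewrite negbK.
  by rewrite mxrank0.
exists (row i K)^T; split; first by rewrite trmx_eq0.
have : row i K *m F^T = 0 by apply/sub_kermxP; rewrite row_sub.
move=> /(congr1 trmx); rewrite trmx_mul trmxK trmx0 /F mul_col_mx => /eqP.
by rewrite col_mx_eq0 => /andP[/eqP -> /eqP ->].
Qed.

Lemma bf_row n (B : 'M[R]_n) x w : bf B x w = ((x^T *m B) *m w) 0 0.
Proof. by []. Qed.

Lemma path3 n (A B : 'M[R]_n) x y w (e r : R) : A^T = A -> B^T = B ->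
  qf B x = 0 -> qf B y = 0 -> bf B x w = 0 -> bf B y w = 0 ->
  r ^+ 2 * qf B w + 2 * e * bf B x y = 0 -> e ^+ 2 = 1 -> bf B x y != 0 ->
  qf A x * qf A y < 0 ->
  exists z, z != 0 /\ qf A z = 0 /\ qf B z = 0.
Proof.
move=> sA sB bx by_ bxw byw hr he g0 hA.
have [|s [s01 hs]] := @quad_path_ivt R n A x (-(2 : R) *: x + r *: w) (x + e *: y - r *: w).
  have -> : x + (- (2 : R) *: x + r *: w) + (x + e *: y - r *: w) = e *: y.
    by apply/matrixP => i j; rewrite !mxE; ring.
  by rewrite /qf bfZl bfZr -/(qf A y) [e * (e * _)]mulrA -expr2 he mul1r; apply: ltW.
set z := _ + _ in hs.
have bwx : bf B w x = 0 by rewrite bf_sym.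
have bwy : bf B w y = 0 by rewrite bf_sym.
have byx : bf B y x = bf B x y by rewrite bf_sym.
have zx : bf B z x = e * s ^+ 2 * bf B x y.
  rewrite /z !(bfDl, bfZl, bfNl) -!/(qf B _) bx bwx byx; ring.
have zy : bf B z y = (1 - s) ^+ 2 * bf B x y.
  rewrite /z !(bfDl, bfZl, bfNl) -!/(qf B _) by_ bwy; ring.
exists z; split; last split => //.
  apply/eqP => z0; move: zx zy; rewrite z0 !bf0l => /esym/eqP h1 /esym/eqP h2.
  have /eqP s1 : (1 - s) ^+ 2 == 0 by move: h2; rewrite mulf_eq0 (negbTE g0) orbF.
  have : e * s ^+ 2 == 0 by move: h1; rewrite mulf_eq0 (negbTE g0) orbF.
  rewrite mulf_eq0 => /orP[/eqP e0| /eqP s2].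
    by move: he; rewrite e0 expr0n /= => /eqP; rewrite eq_sym oner_eq0.
  by clear -s1 s2; nra.
rewrite /qf /z !(bfDl, bfDr, bfZl, bfZr, bfNl, bfNr) -!/(qf B _) bx by_ bxw byw bwx bwy byx.
transitivity (s ^+ 2 * (1 - s) ^+ 2 * (r ^+ 2 * qf B w + 2 * e * bf B x y)); last by rewrite hr mulr0.
ring.
Qed.

Lemma H3 n (A B : 'M[R]_n) : (2 < n)%N -> A^T = A -> B^T = B ->
  (forall z, qf A z = 0 -> qf B z = 0 -> z = 0) ->
  forall x y, qf B x = 0 -> qf B y = 0 -> 0 < qf A x -> qf A y < 0 -> False.
Proof.
move=> n2 sA sB nc x y bx by_ ax ay.
have seg : forall u v, 0 < qf A u -> qf A v < 0 -> qf B u = 0 -> qf B v = 0 ->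
    bf B u v = 0 -> False.
  move=> u v au av bu bv buv.
  have [s [_ [h1 h2]]] := two_signs au av.
  move/eqP: h2; apply; apply: nc => //.
  rewrite /qf !(bfDl, bfDr, bfZl, bfZr, bfNl, bfNr) -!/(qf B _) bu bv buv.
  rewrite (bf_sym v u sB) buv; ring.
have [g0|g0] := eqVneq (bf B x y) 0; first exact: (seg x y).
have [w [w0 [hwx hwy]]] := exists_orth2 (x^T *m B) (y^T *m B) n2.
have bxw : bf B x w = 0 by rewrite bf_row hwx mxE.
have byw : bf B y w = 0 by rewrite bf_row hwy mxE.
have [d0|d0] := eqVneq (qf B w) 0.
  have aw : qf A w != 0 by apply: contra w0 => /eqP h; apply/eqP; apply: nc.
  have [awn|awp] := ltrP (qf A w) 0.
    exact: (seg x w).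
  have awp' : 0 < qf A w by rewrite lt_neqAle eq_sym aw awp.
  by apply: (seg w y) => //; rewrite bf_sym.
have axy : qf A x * qf A y < 0 by nra.
pose c := - (2 * bf B x y) / qf B w.
have cd : c * qf B w = - (2 * bf B x y) by rewrite /c mulrVK // unitfE.
have [c0|c0] := lerP 0 c.
  have hr : Num.sqrt c ^+ 2 * qf B w + 2 * 1 * bf B x y = 0.
    by rewrite sqr_sqrtr // cd mulr1 addNr.
  have [z [z0 [az bz]]] := @path3 n A B x y w 1 (Num.sqrt c) sA sB bx by_ bxw byw
     hr (expr1n _ _) g0 axy.
  by move/eqP: z0; apply; apply: nc.
have hr : Num.sqrt (- c) ^+ 2 * qf B w + 2 * (-1) * bf B x y = 0.
  by rewrite sqr_sqrtr ?oppr_ge0 ?ltW // mulNr cd opprK; ring.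
have he : (-1 : R) ^+ 2 = 1 by rewrite sqrrN expr1n.
have [z [z0 [az bz]]] := @path3 n A B x y w (-1) (Num.sqrt (- c)) sA sB bx by_ bxw byw
   hr he g0 axy.
by move/eqP: z0; apply; apply: nc.
Qed.

End H3.

Section Eig.
Variable R : realType.
Implicit Types (n : nat).

Lemma unit_crit n (M : 'M[R]_n) : (forall u : 'rV_n, u *m M = 0 -> u = 0) -> M \in unitmx.
Proof.
move=> h; rewrite -row_free_unit -kermx_eq0; apply/eqP/row_matrixP => i.
by rewrite row0; apply: h; apply/sub_kermxP; exact: row_sub.
Qed.

Lemma unit_crit_col n (M : 'M[R]_n) : (forall c : 'cV_n, M *m c = 0 -> c = 0) -> M \in unitmx.
Proof.
move=> h; rewrite -unitmx_tr; apply: unit_crit => u hu.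
apply/trmx_inj; rewrite trmx0; apply: h.
by rewrite -(trmxK M) -trmx_mul hu trmx0.
Qed.

Lemma pd_unit n (P : 'M[R]_n) : (forall v, v != 0 -> 0 < qf P v) -> P \in unitmx.
Proof.
move=> hP; apply: unit_crit_col => c hc; apply/eqP; apply: contraT => c0.
by have := hP c c0; rewrite /qf bf_kerr // ltxx.
Qed.

Local Notation C := (R[i]).
Local Notation phi := (real_complex R).

Definition remx m p (z : 'M[C]_(m, p)) : 'M[R]_(m, p) := map_mx (@complex.Re R) z.
Definition immx m p (z : 'M[C]_(m, p)) : 'M[R]_(m, p) := map_mx (@complex.Im R) z.

Lemma Re_sum I (r : seq I) (F : I -> C) : complex.Re (\sum_(i <- r) F i) = \sum_(i <- r) complex.Re (F i).
Proof. by apply: (big_morph (@complex.Re R)) => // [[a b] [c d]]. Qed.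
Lemma Im_sum I (r : seq I) (F : I -> C) : complex.Im (\sum_(i <- r) F i) = \sum_(i <- r) complex.Im (F i).
Proof. by apply: (big_morph (@complex.Im R)) => // [[a b] [c d]]. Qed.

Lemma remx_mul m p q (z : 'M[C]_(m, p)) (X : 'M[R]_(p, q)) :
  remx (z *m map_mx phi X) = remx z *m X.
Proof.
apply/matrixP => i j; rewrite !mxE Re_sum; apply: eq_bigr => k _.
by rewrite !mxE; case: (z i k) => a b /=; rewrite mulr0 subr0.
Qed.
Lemma immx_mul m p q (z : 'M[C]_(m, p)) (X : 'M[R]_(p, q)) :
  immx (z *m map_mx phi X) = immx z *m X.
Proof.
apply/matrixP => i j; rewrite !mxE Im_sum; apply: eq_bigr => k _.
by rewrite !mxE; case: (z i k) => a b /=; rewrite mulr0 add0r.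
Qed.
Lemma remx_scale m p (l : C) (z : 'M[C]_(m, p)) :
  remx (l *: z) = complex.Re l *: remx z - complex.Im l *: immx z.
Proof. by apply/matrixP => i j; rewrite !mxE; case: l => a b; case: (z i j). Qed.
Lemma immx_scale m p (l : C) (z : 'M[C]_(m, p)) :
  immx (l *: z) = complex.Re l *: immx z + complex.Im l *: remx z.
Proof.
apply/matrixP => i j; rewrite !mxE; case: l => a b; case: (z i j) => c d /=.
by rewrite addrC.
Qed.
Lemma reim_eq0 m p (z : 'M[C]_(m, p)) : remx z = 0 -> immx z = 0 -> z = 0.
Proof.
move=> /matrixP hr /matrixP hi; apply/matrixP => i j; have := hr i j; have := hi i j.
by rewrite !mxE; case: (z i j) => a b /= -> ->.
Qed.

Lemma pencil_eig n (P S : 'M[R]_n.+1) : P^T = P -> S^T = S ->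
  (forall v, v != 0 -> 0 < qf P v) ->
  exists (l : R) (v : 'cV[R]_n.+1), v != 0 /\ S *m v = l *: (P *m v).
Proof.
move=> sP sS hP.
have Pu := pd_unit hP.
pose Mc := map_mx phi (invmx P *m S).
have [lam] := @eigenvalue_closed C n.+1 Mc (ltn0Sn n).
move=> /eigenvalueP [u hu u0].
pose w := u *m map_mx phi (invmx P).
have wP : w *m map_mx phi P = u.
  by rewrite /w -mulmxA -map_mxM mulVmx // map_mx1 mulmx1.
have wS : w *m map_mx phi S = lam *: (w *m map_mx phi P).
  by rewrite wP -hu /w -mulmxA -map_mxM.
have w0 : w != 0 by apply: contraNneq u0 => w0; rewrite -wP w0 mul0mx.
clearbody w.
set a := (remx w)^T; set b := (immx w)^T.
have ha : S *m a = complex.Re lam *: (P *m a) - complex.Im lam *: (P *m b).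
  have := congr1 (@remx _ _) wS; rewrite remx_mul remx_scale !remx_mul immx_mul.
  move=> /(congr1 trmx); rewrite !linearD !linearZ /= !linearN !linearZ /= !trmx_mul sS sP.
  by rewrite scalerN.
have hb : S *m b = complex.Re lam *: (P *m b) + complex.Im lam *: (P *m a).
  have := congr1 (@immx _ _) wS; rewrite immx_mul immx_scale !immx_mul remx_mul.
  by move=> /(congr1 trmx); rewrite !linearD !linearZ /= !trmx_mul sS sP.
have ab0 : (a != 0) || (b != 0).
  apply: contraNT w0; rewrite negb_or !negbK => /andP[/eqP a0 /eqP b0].
  by apply/eqP/reim_eq0; apply: trmx_inj; rewrite trmx0.
have sumpos : 0 < qf P a + qf P b.
  case/orP: ab0 => h0.
    by apply: ltr_pwDl; [exact: hP| rewrite /qf; case: (eqVneq b 0) => [->|bn]; [rewrite bf0l|exact/ltW/hP]].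
  by apply: ltr_pwDr; [exact: hP| rewrite /qf; case: (eqVneq a 0) => [->|an]; [rewrite bf0l|exact/ltW/hP]].
have e1 : bf S b a = complex.Re lam * bf P b a - complex.Im lam * qf P b.
  by rewrite bf_mulr ha bfDr bfNr !bfZr -!bf_mulr.
have e2 : bf S a b = complex.Re lam * bf P a b + complex.Im lam * qf P a.
  by rewrite bf_mulr hb bfDr !bfZr -!bf_mulr.
have im0 : complex.Im lam = 0.
  rewrite (bf_sym b a sS) (bf_sym b a sP) e2 in e1.
  have : complex.Im lam * (qf P a + qf P b) = 0 by rewrite /qf; move: e1; rewrite /qf => e1; lra.
  by move/eqP; rewrite mulf_eq0 (gt_eqF sumpos) orbF => /eqP.
case/orP: ab0 => h0.
  by exists (complex.Re lam), a; split => //; rewrite ha im0 scale0r subr0.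
by exists (complex.Re lam), b; split => //; rewrite hb im0 scale0r addr0.
Qed.

End Eig.

Section SD.
Variable R : realType.
Implicit Types (n : nat).

Lemma compl n (v : 'cV[R]_n.+1) (f : 'rV[R]_n.+1) : v != 0 -> (f *m v) 0 0 != 0 ->
  exists W : 'M[R]_(n.+1, n), f *m W = 0 /\ row_mx v W \in unitmx.
Proof.
move=> v0 fv0.
have [j vj] : exists j, v j 0 != 0.
  case: (pickP (fun j => v j 0 != 0)) => [j hj|h]; first by exists j.
  by case/eqP: v0; apply/matrixP => i k; rewrite ord1 mxE; move: (h i) => /negbFE/eqP.
set fv := (f *m v) 0 0 in fv0.
pose Pi : 'M[R]_n.+1 := 1%:M - fv^-1 *: (v *m f).
pose E : 'M[R]_(n.+1, n) := \matrix_(i, k) ((i == lift j k)%:R).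
have fvE : f *m v = fv%:M by apply: mx11_scalar.
have fPi : f *m Pi = 0.
  rewrite /Pi mulmxBr mulmx1 -scalemxAr mulmxA fvE mul_scalar_mx scalerA mulVf //.
  by rewrite scale1r subrr.
exists (Pi *m E); split; first by rewrite mulmxA fPi mul0mx.
apply: unit_crit_col => c hc.
pose c1 := @usubmx _ 1 n 1 c; pose c2 := @dsubmx _ 1 n 1 c.
have h : v *m c1 + (Pi *m E) *m c2 = 0.
  by rewrite -mul_row_col /c1 /c2 vsubmxK.
rewrite -[c](@vsubmxK _ 1 n 1) -/c1 -/c2.
clearbody c1 c2.
have c10 : c1 = 0.
  have := congr1 (mulmx f) h; rewrite mulmx0 mulmxDr mulmxA fvE mul_scalar_mx.
  rewrite !mulmxA fPi !mul0mx addr0 => /eqP; rewrite scaler_eq0 (negbTE fv0) /= => /eqP //.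
move: h; rewrite c10 mulmx0 add0r => h.
have hE : E *m c2 = fv^-1 *: (v *m (f *m (E *m c2))).
  apply/eqP; rewrite -subr_eq0; apply/eqP; rewrite -[RHS]h.
  by rewrite -mulmxA /Pi mulmxBl mul1mx -scalemxAl !mulmxA.
have Ej : (E *m c2) j 0 = 0.
  rewrite mxE big1 // => k _; rewrite mxE.
  by have := neq_lift j k; rewrite eq_sym => /negbTE ->; rewrite mul0r.
have fE0 : (f *m (E *m c2)) 0 0 = 0.
  have vj' : (v *m (f *m (E *m c2))) j 0 = v j 0 * (f *m (E *m c2)) 0 0.
    by rewrite mxE big_ord1.
  move: Ej; rewrite {1}hE mxE vj'.
  move/eqP; rewrite !mulf_eq0 invr_eq0 (negbTE fv0) (negbTE vj) /= => /eqP //.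
have E0 : E *m c2 = 0.
  rewrite {1}hE; rewrite (mx11_scalar (f *m (E *m c2))) fE0.
  by rewrite mul_mx_scalar scale0r scaler0.
have c20 : c2 = 0.
  apply/matrixP => k z; rewrite ord1 mxE.
  move/matrixP: E0 => /(_ (lift j k) 0); rewrite !mxE (bigD1 k) //= big1.
    by rewrite mxE eqxx mul1r addr0.
  by move=> k' kk'; rewrite mxE (inj_eq (@lift_inj _ j)) eq_sym (negbTE kk') mul0r.
by rewrite c20 col_mx0.
Qed.

End SD.

Section SD2.
Variable R : realType.
Implicit Types (n : nat).

Definition goodG n (A B : 'M[R]_n) := exists mu sg : R,
  (forall x, 0 <= qf (mu *: A + sg *: B) x) /\
  (forall x, qf (mu *: A + sg *: B) x = 0 -> A *m x = 0 /\ B *m x = 0).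

Lemma qf_congr n m (M : 'M[R]_n) (W : 'M[R]_(n, m)) c :
  qf (W^T *m M *m W) c = qf M (W *m c).
Proof. by rewrite /qf /bf trmx_mul !mulmxA. Qed.

Lemma block_congr n (M : 'M[R]_n.+1) v (W : 'M[R]_(n.+1, n)) (C1 : 'M[R]_n) :
  M^T = M -> v^T *m M *m W = 0 ->
  (row_mx v W *m block_mx (1%:M : 'M_1) 0 0 C1)^T *m M *m
    (row_mx v W *m block_mx (1%:M : 'M_1) 0 0 C1)
  = block_mx (v^T *m M *m v) 0 0 (C1^T *m (W^T *m M *m W) *m C1).
Proof.
move=> sM h.
have h' : W^T *m M *m v = 0.
  have : (W^T *m M *m v)^T = 0 by rewrite !trmx_mul trmxK sM mulmxA h.
  by move/(congr1 trmx); rewrite trmxK trmx0.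
have hX : col_mx v^T W^T *m M *m row_mx v W = block_mx (v^T *m M *m v) 0 0 (W^T *m M *m W).
  by rewrite mul_col_mx mul_col_row h h'.
rewrite trmx_mul tr_row_mx tr_block_mx !trmx0 trmx1.
transitivity (block_mx (1%:M : 'M_1) 0 0 C1^T *m (col_mx v^T W^T *m M *m row_mx v W)
   *m block_mx (1%:M : 'M_1) 0 0 C1); first by rewrite !mulmxA.
rewrite hX !mulmx_block.
by rewrite !(mul0mx, mulmx0, addr0, add0r, mul1mx, mulmx1).
Qed.

Lemma vMW0 n (M : 'M[R]_n.+1) v (W : 'M[R]_(n.+1, n)) (f : 'rV_n.+1) :
  f *m W = 0 -> (forall w, f *m w = 0 -> bf M v w = 0) -> v^T *m M *m W = 0.
Proof.
move=> fW hK; apply/matrixP => i k; rewrite ord1.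
have := hK (col k W); rewrite colE mulmxA fW mul0mx => /(_ erefl).
have -> : (v^T *m M *m W) 0 k = (col k (v^T *m M *m W)) 0 0 by rewrite [RHS]mxE.
rewrite /bf colE !mulmxA => ->; by rewrite mxE.
Qed.

End SD2.

Section SD3.
Variable R : realType.
Implicit Types (n : nat).

Lemma sym_comb n (A B : 'M[R]_n) a b : A^T = A -> B^T = B -> (a *: A + b *: B)^T = a *: A + b *: B.
Proof. by move=> sA sB; rewrite linearD !linearZ /= sA sB. Qed.

Lemma sym_congr n m (M : 'M[R]_n) (W : 'M[R]_(n, m)) : M^T = M -> (W^T *m M *m W)^T = W^T *m M *m W.
Proof. by move=> sM; rewrite !trmx_mul trmxK sM mulmxA. Qed.

Lemma comb_congr n m (A B : 'M[R]_n) (W : 'M[R]_(n, m)) a b :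
  a *: (W^T *m A *m W) + b *: (W^T *m B *m W) = W^T *m (a *: A + b *: B) *m W.
Proof. by rewrite mulmxDr mulmxDl -!scalemxAr -!scalemxAl. Qed.

Lemma diag0 (M : 'M[R]_0) : is_diag_mx M.
Proof. by apply/is_diag_mxP => -[]. Qed.

Lemma ex_nonzero n : exists v : 'cV[R]_n.+1, v != 0.
Proof.
exists (const_mx 1); apply/eqP => /matrixP /(_ ord0 ord0); rewrite !mxE.
by move/eqP; rewrite oner_eq0.
Qed.

Lemma SD_good n (A B : 'M[R]_n) : A^T = A -> B^T = B -> goodG A B ->
  exists C : 'M[R]_n, C \in unitmx /\ is_diag_mx (C^T *m A *m C) /\ is_diag_mx (C^T *m B *m C).
Proof.
elim: n A B => [|n IH] A B sA sB [mu [sg [hpsd hker]]].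
  exists 1%:M; split; first exact: unitmx1.
  by split; apply/is_diag_mxP => -[].
set P := mu *: A + sg *: B in hpsd hker.
have sP : P^T = P by rewrite sym_comb.
have [v [f [v0 [fv0 hK]]]] : exists v (f : 'rV_n.+1), v != 0 /\ (f *m v) 0 0 != 0 /\
    (forall w, f *m w = 0 -> bf A v w = 0 /\ bf B v w = 0).
  case: (classic (exists v : 'cV[R]_n.+1, v != 0 /\ A *m v = 0 /\ B *m v = 0)) => [|hn].
    move=> [v [v0 [Av Bv]]]; exists v, v^T; split => //; split.
      apply: contra v0 => /eqP h; apply/eqP; apply: norm2_eq0.
      by rewrite /bf mulmx1.
    by move=> w _; split; apply: bf_kerl.
  have hPD : forall x, x != 0 -> 0 < qf P x.
    move=> x x0; rewrite lt_neqAle hpsd andbT; apply/eqP => /esym /hker [Ax Bx].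
    by apply: hn; exists x.
  have [v [a [b [v0 [Av Bv]]]]] : exists (v : 'cV[R]_n.+1) (a b : R), v != 0 /\ A *m v = a *: (P *m v) /\
      B *m v = b *: (P *m v).
    have [sg0|sgn0] := eqVneq sg 0.
      have mu0 : mu != 0.
        apply/eqP => mu0; have [x x0] := @ex_nonzero n.
        by have := hPD x x0; rewrite /P mu0 sg0 !scale0r addr0 /qf /bf mulmx0 mul0mx mxE ltxx.
      have [l [v [v0 Bv]]] := pencil_eig sP sB hPD.
      have Pv : P *m v = mu *: (A *m v) by rewrite /P sg0 scale0r addr0 -scalemxAl.
      exists v, mu^-1, l; split => //; split => //.
      by rewrite Pv scalerA mulVf // scale1r.
    have [l [v [v0 Av]]] := pencil_eig sP sA hPD.
    have Pv : P *m v = mu *: (A *m v) + sg *: (B *m v) by rewrite /P mulmxDl -!scalemxAl.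
    have e : sg *: (B *m v) = (1 - mu * l) *: (P *m v).
      by rewrite scalerBl scale1r -scalerA -Av Pv addrAC subrr add0r.
    exists v, l, (sg^-1 * (1 - mu * l)); split => //; split => //.
    by rewrite -(scalerK sgn0 (B *m v)) e scalerA.
  have bfT : forall M : 'M[R]_n.+1, M^T = M -> forall w, bf M v w = (((M *m v)^T) *m w) 0 0.
    by move=> M sM w; rewrite /bf trmx_mul sM.
  exists v, (P *m v)^T; split => //; split.
    by rewrite -bfT // gt_eqF // hPD.
  move=> w hw; split.
    by rewrite bfT // Av linearZ /= -scalemxAl hw scaler0 mxE.
  by rewrite bfT // Bv linearZ /= -scalemxAl hw scaler0 mxE.
have [W [fW C0u]] := compl v0 fv0.
pose A' := W^T *m A *m W; pose B' := W^T *m B *m W.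
have gG : goodG A' B'.
  exists mu, sg; split.
    by move=> c; rewrite comb_congr qf_congr.
  move=> c; rewrite comb_congr qf_congr => /hker [h1 h2].
  by rewrite /A' /B' -!mulmxA h1 h2 !mulmx0.
have [C1 [C1u [dA dB]]] := IH A' B' (sym_congr W sA) (sym_congr W sB) gG.
exists (row_mx v W *m block_mx (1%:M : 'M_1) 0 0 C1); split.
  have bu : block_mx (1%:M : 'M_1) 0 0 C1 \in unitmx.
    by rewrite unitmxE det_ublock det1 mul1r -unitmxE.
  by rewrite unitmx_mul C0u bu.
have hA := vMW0 fW (fun w h => (hK w h).1).
have hB := vMW0 fW (fun w h => (hK w h).2).
rewrite (block_congr _ sA hA) (block_congr _ sB hB).
have dblk : forall (a : 'M[R]_1) (D : 'M[R]_n), is_diag_mx D -> is_diag_mx (block_mx a 0 0 D).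
  by move=> a D hD; rewrite is_diag_block_mx // !eqxx mx11_is_diag hD.
by split; apply: dblk.
Qed.

End SD3.

Section Pert.
Variable R : realType.
Implicit Types (n : nat).

Lemma decomp n m1 m2 (X : 'M[R]_(m1, n)) (Y : 'M[R]_(m2, n)) :
  (n <= \rank X + \rank Y)%N ->
  (forall u : 'rV[R]_n, (u <= X)%MS -> (u <= Y)%MS -> u = 0) ->
  forall x : 'rV[R]_n, exists a b, x = a *m X + b *m Y.
Proof.
move=> hr hc x.
have cap0 : (X :&: Y)%MS = 0.
  apply/row_matrixP => i; rewrite row0; apply: hc.
    by have := row_sub i (X :&: Y)%MS; rewrite sub_capmx => /andP[].
  by have := row_sub i (X :&: Y)%MS; rewrite sub_capmx => /andP[].
have full : row_full (X + Y)%MS.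
  rewrite -col_leq_rank; have := mxrank_sum_cap X Y; rewrite cap0 mxrank0 addn0 => ->.
  exact: hr.
have /sub_addsmxP [[a b] /= e] := submx_full x full.
by exists a, b.
Qed.

Lemma qf_diag n (D : 'M[R]_n) y : is_diag_mx D ->
  qf D y = \sum_i D i i * y i 0 ^+ 2.
Proof.
move=> /is_diag_mxP hD; rewrite /qf /bf mxE; apply: eq_bigr => i _.
rewrite mxE (bigD1 i) //= big1 ?addr0.
  by rewrite !mxE; ring.
by move=> j ji; rewrite mxE hD ?mulr0 // eq_sym.
Qed.

Lemma sum_pos n (c : 'I_n -> R) (y : 'cV[R]_n) : (forall i, 0 < c i) -> y != 0 ->
  0 < \sum_i c i * y i 0 ^+ 2.
Proof.
move=> hc y0.
have [j yj] : exists j, y j 0 != 0.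
  case: (pickP (fun j => y j 0 != 0)) => [j hj|h]; first by exists j.
  by case/eqP: y0; apply/matrixP => i k; rewrite ord1 mxE; move: (h i) => /negbFE/eqP.
rewrite (bigD1 j) //=; apply: ltr_pwDl.
  by rewrite mulr_gt0 // exprn_even_gt0.
by apply: sumr_ge0 => i _; rewrite mulr_ge0 ?sqr_ge0 ?ltW.
Qed.

End Pert.

Section Pert2.
Variable R : realType.
Implicit Types (n : nat).

Lemma diag_comb n (D1 D2 : 'M[R]_n) a b : is_diag_mx D1 -> is_diag_mx D2 ->
  is_diag_mx (a *: D1 + b *: D2).
Proof.
move=> /is_diag_mxP h1 /is_diag_mxP h2; apply/is_diag_mxP => i j ij.
by rewrite !mxE h1 // h2 // !mulr0 addr0.
Qed.

Lemma unit_inj n (C : 'M[R]_n) (y : 'cV[R]_n) : C \in unitmx -> C *m y = 0 -> y = 0.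
Proof. by move=> Cu h; rewrite -[y](mulKmx Cu) h mulmx0. Qed.

Lemma delta_ne n (i j : 'I_n) : j != i -> delta_mx i (0 : 'I_1) j 0 = 0 :> R.
Proof. by move=> ji; rewrite mxE (negbTE ji). Qed.

Lemma coef_pos (d a t T e D : R) : 0 < d -> 0 < e -> e * T = 1 - e -> a = t * d ->
  0 <= t -> t <= T -> - a <= D -> 0 < d + e * D.
Proof.
move=> d0 e0 eT ad t0 tT aD.
have h2 : e * t * d <= e * T * d by rewrite ler_pM2r // ler_pM2l.
nra.
Qed.

Lemma delta_eq n (i : 'I_n) : delta_mx i (0 : 'I_1) i 0 = 1 :> R.
Proof. by rewrite mxE !eqxx. Qed.

Lemma pd_small n (P S : 'M[R]_n) : P^T = P -> S^T = S ->
  (forall x, x != 0 -> 0 < qf P x) ->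
  exists e : R, 0 < e /\ forall x, x != 0 -> 0 < qf (P + e *: S) x.
Proof.
move=> sP sS hP.
have gG : goodG P S.
  exists 1, 0; rewrite scale1r scale0r addr0; split.
    by move=> x; case: (eqVneq x 0) => [->|x0]; [rewrite /qf bf0l | exact/ltW/hP].
  move=> x qx; case: (eqVneq x 0) => [->|x0]; first by rewrite !mulmx0.
  by have := hP x x0; rewrite qx ltxx.
have [C [Cu [dP dS]]] := SD_good sP sS gG.
set D1 := C^T *m P *m C in dP; set D2 := C^T *m S *m C in dS.
have D1E : C^T *m P *m C = D1 by []. have D2E : C^T *m S *m C = D2 by [].
clearbody D1 D2.
have dpos : forall i, 0 < D1 i i.
  move=> i; have := qf_diag (delta_mx i 0) dP.
  rewrite (bigD1 i) //= big1 => [|j ji]; last by rewrite delta_ne // expr0n mulr0.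
  rewrite delta_eq expr1n mulr1 addr0 => <-.
  rewrite -D1E qf_congr; apply: hP; apply/eqP => h; have := unit_inj Cu h.
  by move/matrixP => /(_ i 0); rewrite !mxE !eqxx => /eqP; rewrite oner_eq0.
pose T := \sum_i `|D2 i i| / D1 i i.
have T0 : 0 <= T by apply: sumr_ge0 => i _; rewrite divr_ge0 // ltW.
pose e := (1 + T)^-1.
have T1 : 0 < 1 + T by apply: (lt_le_trans ltr01); rewrite lerDl.
have e0 : 0 < e by rewrite invr_gt0.
have eT : e * T = 1 - e by rewrite /e; field; rewrite gt_eqF.
exists e; split => // x x0.
pose y := invmx C *m x.
have xE : x = C *m y by rewrite /y mulKVmx.
have y0 : y != 0 by apply: contra x0; rewrite xE => /eqP ->; rewrite mulmx0.
rewrite xE -qf_congr -[P]scale1r -comb_congr D1E D2E qf_diag; last exact: diag_comb.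
apply: sum_pos => // i; rewrite !mxE.
rewrite mul1r; apply: (@coef_pos _ `|D2 i i| (`|D2 i i| / D1 i i) T) => //.
- by rewrite divfK // gt_eqF.
- by rewrite divr_ge0 // ltW.
- rewrite /T (bigD1 i) //= lerDl.
  by apply: sumr_ge0 => j _; rewrite divr_ge0 // ltW.
- by rewrite lerNl -normrN ler_norm.
Qed.

End Pert2.

Section Pert3.
Variable R : realType.
Implicit Types (n : nat).

Lemma bfZm n (M : 'M[R]_n) a x y : bf (a *: M) x y = a * bf M x y.
Proof. by rewrite /bf -scalemxAr -scalemxAl mxE. Qed.

Lemma qf_split n (M : 'M[R]_n) k l : M^T = M ->
  qf M (k + l) = qf M k + 2 * bf M k l + qf M l.
Proof. by move=> sM; rewrite /qf !(bfDl, bfDr) (bf_sym l k sM); ring. Qed.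

Lemma perturb_pos n (P S : 'M[R]_n) : P^T = P -> S^T = S ->
  (forall x, 0 <= qf P x) -> (forall x, x != 0 -> P *m x = 0 -> 0 < qf S x) ->
  exists e : R, forall x, x != 0 -> 0 < qf (P + e *: S) x.
Proof.
move=> sP sS hP hS.
pose Kr := kermx P; pose Lr := kermx ((Kr *m S)^T).
have kerK : forall u : 'rV[R]_n, (u <= Kr)%MS -> P *m u^T = 0.
  move=> u /sub_kermxP h; have := congr1 trmx h; rewrite trmx_mul sP trmx0 //.
have kerL : forall u : 'rV[R]_n, (u <= Lr)%MS -> Kr *m S *m u^T = 0.
  move=> u /sub_kermxP h; have := congr1 trmx h; rewrite trmx_mul trmxK trmx0 //.
have cap : forall u : 'rV[R]_n, (u <= Kr)%MS -> (u <= Lr)%MS -> u = 0.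
  move=> u uK uL; apply/trmx_inj; rewrite trmx0; apply/eqP; apply: contraT => u0.
  have := hS _ u0 (kerK u uK); case/submxP: uK => c cE.
  have qS : qf S u^T = 0.
    rewrite /qf /bf trmxK {1}cE -[c *m Kr *m S]mulmxA -mulmxA (kerL u uL).
    by rewrite mulmx0 mxE.
  by rewrite qS ltxx.
have rk : (n <= \rank Kr + \rank Lr)%N.
  rewrite /Lr mxrank_ker mxrank_tr.
  have h1 := mxrankM_maxl Kr S; have h2 := rank_leq_col Kr.
  by rewrite addnBCA // ?leq_addr //; apply: (leq_trans h1); exact: rank_leq_row.
have kerK' : forall u : 'rV[R]_n, P *m u^T = 0 -> (u <= Kr)%MS.
  move=> u h; apply/sub_kermxP; have := congr1 trmx h; rewrite trmx_mul trmxK sP trmx0 //.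
clearbody Kr Lr.
pose Lb := row_base Lr; pose Lm := Lb^T.
have LbLr : (Lb <= Lr)%MS by rewrite /Lb eq_row_base.
have LrLb : (Lr <= Lb)%MS by rewrite /Lb eq_row_base.
pose P2 := Lm^T *m P *m Lm; pose S2 := Lm^T *m S *m Lm.
have hP2 : forall c, c != 0 -> 0 < qf P2 c.
  move=> c c0; rewrite /P2 qf_congr lt_neqAle hP andbT; apply/eqP => /esym h.
  have Pl := psd_ker sP hP h.
  have u0 : (Lm *m c)^T = 0.
    apply: cap.
      by apply: kerK'; rewrite trmxK.
    by rewrite trmx_mul trmxK (submx_trans (submxMl _ _) LbLr).
  move: u0; rewrite trmx_mul trmxK => /eqP; rewrite mulmx_free_eq0 ?row_base_free //.
  by rewrite trmx_eq0 (negbTE c0).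
have [e [e0 he]] := pd_small (sym_congr Lm sP) (sym_congr Lm sS) hP2.
exists e => x x0.
have [a [b xE]] := decomp rk cap x^T.
have /submxP [c bE] : (b *m Lr <= Lb)%MS by rewrite (submx_trans (submxMl _ _) LrLb).
set k := (a *m Kr)^T; set cc := c^T.
have xE' : x = k + Lm *m cc.
  by rewrite -[x]trmxK xE bE linearD /= [(c *m Lb)^T]trmx_mul.
have Pk : P *m k = 0 by apply: kerK; exact: submxMl.
have hbf : bf (P + e *: S) k (Lm *m cc) = 0.
  rewrite -[P]scale1r bf_comb bf_kerl // mulr0 add0r.
  rewrite /bf /k trmxK.
  have h : Kr *m S *m (Lm *m cc) = 0.
    rewrite -[Lm *m cc]trmxK; apply: kerL.
    by rewrite /Lm /cc trmx_mul !trmxK (submx_trans (submxMl _ _) LbLr).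
  by rewrite -[a *m Kr *m S]mulmxA -mulmxA h mulmx0 mxE mulr0.
have sPS : (P + e *: S)^T = P + e *: S by rewrite -[P]scale1r sym_comb.
rewrite xE' qf_split // hbf mulr0 addr0.
have -> : qf (P + e *: S) k = e * qf S k.
  by rewrite /qf -[P]scale1r bf_comb bf_kerl // mulr0 add0r.
have -> : qf (P + e *: S) (Lm *m cc) = qf (P2 + e *: S2) cc.
  by rewrite -qf_congr -[P]scale1r -comb_congr scale1r.
have q2 : 0 <= qf (P2 + e *: S2) cc.
  by case: (eqVneq cc 0) => [->|c0]; [rewrite /qf bf0l | exact/ltW/he].
case: (eqVneq k 0) => [k0|k0].
  rewrite k0 /qf bf0l mulr0 add0r; apply: he; apply: contra x0 => /eqP c0.
  by rewrite xE' k0 c0 mulmx0 addr0.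
have ek : 0 < e * qf S k by rewrite mulr_gt0 // hS.
by apply: (lt_le_trans ek); rewrite lerDl.
Qed.

End Pert3.

Section Cal.
Variable R : realType.
Implicit Types (n : nat).

Lemma ratio_scalar (a b a' b' al be : R) : 0 < b -> b' < 0 ->
  (forall s, b + 2 * be * s + b' * s ^+ 2 = 0 -> 0 < a + 2 * al * s + a' * s ^+ 2) ->
  a * b' < a' * b.
Proof.
move=> b0 b'0 h.
pose D := be ^+ 2 - b * b'.
have D0 : 0 < D by rewrite /D; nra.
pose r := Num.sqrt D.
have r0 : 0 < r by rewrite sqrtr_gt0.
have rr : r ^+ 2 = D by rewrite sqr_sqrtr // ltW.
have b'n : b' != 0 by rewrite lt_eqF.
pose s1 := (- be - r) / b'; pose s2 := (- be + r) / b'.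
have root1 : b + 2 * be * s1 + b' * s1 ^+ 2 = 0.
  rewrite /s1; apply: (mulfI b'n); rewrite mulr0.
  have -> : b' * (b + 2 * be * ((- be - r) / b') + b' * ((- be - r) / b') ^+ 2)
      = b * b' - be ^+ 2 + r ^+ 2 by field.
  by rewrite rr /D; ring.
have root2 : b + 2 * be * s2 + b' * s2 ^+ 2 = 0.
  rewrite /s2; apply: (mulfI b'n); rewrite mulr0.
  have -> : b' * (b + 2 * be * ((- be + r) / b') + b' * ((- be + r) / b') ^+ 2)
      = b * b' - be ^+ 2 + r ^+ 2 by field.
  by rewrite rr /D; ring.
have A1 := h _ root1; have A2 := h _ root2.
have prod : s1 * s2 = b / b'.
  rewrite /s1 /s2; apply: (mulfI b'n); apply: (mulfI b'n).
  have -> : b' * (b' * ((- be - r) / b' * ((- be + r) / b'))) = be ^+ 2 - r ^+ 2 by field.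
  by rewrite rr /D; field.
have diff : s2 - s1 = 2 * r / b' by rewrite /s1 /s2; field.
have s21 : s2 - s1 < 0 by rewrite diff pmulr_rlt0 ?invr_lt0 // mulr_gt0.
have id : s2 * (a + 2 * al * s1 + a' * s1 ^+ 2) - s1 * (a + 2 * al * s2 + a' * s2 ^+ 2)
   = (s2 - s1) * (a - a' * (s1 * s2)) by ring.
have ps : s1 * s2 < 0 by rewrite prod pmulr_rlt0 // invr_lt0.
have s2n : s2 < 0.
  have : s2 < s1 by lra.
  move=> h21; nra.
have s1p : 0 < s1 by nra.
have lhs : s2 * (a + 2 * al * s1 + a' * s1 ^+ 2) - s1 * (a + 2 * al * s2 + a' * s2 ^+ 2) < 0.
  by nra.
have key : 0 < a - a' * (b / b') by rewrite -prod; nra.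
have : 0 < (a - a' * (b / b')) * (- b') by rewrite mulr_gt0 // oppr_gt0.
have -> : (a - a' * (b / b')) * (- b') = a' * b - a * b' by field.
lra.
Qed.

End Cal.

Section Cal2.
Variable R : realType.
Implicit Types (n : nat).

Lemma qf_comb n (A B : 'M[R]_n) a b x : qf (a *: A + b *: B) x = a * qf A x + b * qf B x.
Proof. exact: bf_comb. Qed.

Lemma ratio_lt n (A B : 'M[R]_n) x y : A^T = A -> B^T = B ->
  (forall z, z != 0 -> qf B z = 0 -> 0 < qf A z) ->
  qf B x < 0 -> 0 < qf B y -> qf A x / qf B x < qf A y / qf B y.
Proof.
move=> sA sB hZ bx by_.
have h := @ratio_scalar R (qf A y) (qf B y) (qf A x) (qf B x) (bf A y x) (bf B y x) by_ bx.
have : qf A y * qf B x < qf A x * qf B y.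
  apply: h => s hs.
  have zE : forall M : 'M[R]_n, M^T = M ->
      qf M (y + s *: x) = qf M y + 2 * bf M y x * s + qf M x * s ^+ 2.
    by move=> M sM; rewrite qf_split // /qf !(bfZl, bfZr) -/(qf M x); ring.
  rewrite -zE //; apply: hZ; last by rewrite zE.
  apply/eqP => z0; have : y = - (s *: x).
    by apply/eqP; rewrite -subr_eq0 opprK; apply/eqP.
  move=> yE; move: by_; rewrite yE /qf bfNl bfNr opprK !(bfZl, bfZr) -/(qf B x).
  have : 0 <= s * s by rewrite -expr2 sqr_ge0.
  by move=> ss; rewrite mulrA; nra.
move=> h1; rewrite ltr_pdivlMr // mulrAC ltr_ndivrMr //; lra.
Qed.

End Cal2.

Section Cal3.
Variable R : realType.
Implicit Types (n : nat).

Lemma perturb n (P S : 'M[R]_n) : P^T = P -> S^T = S ->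
  (forall x, 0 <= qf P x) -> (forall x, x != 0 -> P *m x = 0 -> qf S x != 0) ->
  exists e : R, forall x, x != 0 -> 0 < qf (P + e *: S) x.
Proof.
move=> sP sS hP hS.
case: (classic (exists x : 'cV[R]_n, x != 0 /\ P *m x = 0 /\ qf S x < 0)).
  move=> [v [v0 [Pv Sv]]].
  have sS' : (-1 *: S)^T = -1 *: S by rewrite linearZ /= sS.
  have [e he] : exists e : R, forall x, x != 0 -> 0 < qf (P + e *: (-1 *: S)) x.
    apply: perturb_pos => // y y0 Py.
    rewrite /qf bfZm mulN1r oppr_gt0 -/(qf S y).
    have := hS y y0 Py; case: ltrgtP => // Syp _.
    have [s [_ [h1 h2]]] := two_signs Syp Sv.
    have Pz : P *m (y + s *: (v - y)) = 0.
      by rewrite mulmxDr -scalemxAr mulmxBr Py Pv subrr scaler0 addr0.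
    by move: (hS _ h2 Pz); rewrite h1 eqxx.
  by exists (- e) => x x0; rewrite scalerA mulrN1 in he; exact: he.
move=> hn; apply: perturb_pos => // y y0 Py.
have := hS y y0 Py; case: ltrgtP => // Syn _.
by exfalso; apply: hn; exists y.
Qed.

Lemma calabi_core n (A B : 'M[R]_n) : A^T = A -> B^T = B ->
  (forall z, z != 0 -> qf B z = 0 -> 0 < qf A z) ->
  (exists u, qf B u < 0) -> (exists w, 0 < qf B w) ->
  exists s : R, forall x, x != 0 -> 0 < qf (A + s *: B) x.
Proof.
move=> sA sB hZ [u bu] [w bw].
pose E := fun r : R => exists x, qf B x < 0 /\ r = qf A x / qf B x.
have En : nonempty E by exists (qf A u / qf B u); exists u.
have Eub : forall y, 0 < qf B y -> ubound E (qf A y / qf B y).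
  by move=> y by_ r [x [bx ->]]; apply/ltW/ratio_lt.
have hs : has_sup E by split => //; exists (qf A w / qf B w); exact: Eub.
pose t := sup E.
have psd : forall x, 0 <= qf (A + (- t) *: B) x.
  move=> x; rewrite -[A]scale1r qf_comb mul1r mulNr subr_ge0.
  case: (ltrgtP (qf B x) 0) => bx.
  - have : qf A x / qf B x <= t by apply: sup_upper_bound => //; exists x.
    by rewrite ler_ndivrMr.
  - have : t <= qf A x / qf B x by apply: ge_sup => //; exact: Eub.
    by rewrite ler_pdivlMr.
  - rewrite bx mulr0; case: (eqVneq x 0) => [->|x0]; first by rewrite /qf bf0l.
    exact/ltW/hZ.
have sP : (A + (- t) *: B)^T = A + (- t) *: B by rewrite -[A]scale1r sym_comb.
have hk : forall x, x != 0 -> (A + (- t) *: B) *m x = 0 -> qf B x != 0.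
  move=> x x0 Px; apply/eqP => bx.
  have qP : qf (A + (- t) *: B) x = 0 by rewrite /qf bf_kerr.
  move: qP; rewrite -[A]scale1r qf_comb bx mulr0 addr0 mul1r => ax.
  by have := hZ x x0 bx; rewrite ax ltxx.
have [e he] := perturb sP sB psd hk.
exists (e - t) => x x0; have := he x x0.
by rewrite -addrA -scalerDl [- t + e]addrC.
Qed.

End Cal3.

Section Cal4.
Variable R : realType.
Implicit Types (n : nat).

Lemma calabi n (A B : 'M[R]_n) : (2 < n)%N -> A^T = A -> B^T = B ->
  (forall z, qf A z = 0 -> qf B z = 0 -> z = 0) ->
  exists mu sg : R, forall x, x != 0 -> 0 < qf (mu *: A + sg *: B) x.
Proof.
move=> n2 sA sB nc.
have ncA : forall x, x != 0 -> qf B x = 0 -> qf A x != 0.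
  by move=> x x0 bx; apply: contra x0 => /eqP ax; apply/eqP; apply: nc.
have sN : forall M : 'M[R]_n, M^T = M -> (-1 *: M)^T = -1 *: M.
  by move=> M sM; rewrite linearZ /= sM.
case: (classic (forall x, 0 <= qf B x)) => [psdB|npsd].
  have [e he] : exists e : R, forall x, x != 0 -> 0 < qf (B + e *: A) x.
    apply: perturb => // x x0 Bx; apply: ncA => //; rewrite /qf bf_kerr //.
  by exists e, 1 => x x0; rewrite scale1r addrC; exact: he.
case: (classic (forall x, qf B x <= 0)) => [nsdB|nnsd].
  have [e he] : exists e : R, forall x, x != 0 -> 0 < qf (-1 *: B + e *: A) x.
    apply: perturb => //; first by apply: sN.
      by move=> x; rewrite /qf bfZm mulN1r oppr_ge0; exact: nsdB.
    move=> x x0 Bx; apply: ncA => //; rewrite /qf bf_kerr //.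
    by move: Bx; rewrite -scalemxAl => /eqP; rewrite scaler_eq0 oppr_eq0 oner_eq0 => /eqP.
  by exists e, (-1) => x x0; rewrite addrC; exact: he.
have [u bu] : exists u, qf B u < 0.
  apply: NNPP => h; apply: npsd => x; rewrite leNgt; apply/negP => hx.
  by apply: h; exists x.
have [w bw] : exists w, 0 < qf B w.
  apply: NNPP => h; apply: nnsd => x; rewrite leNgt; apply/negP => hx.
  by apply: h; exists x.
case: (classic (exists z, qf B z = 0 /\ qf A z < 0)) => [[z0 [bz0 az0]]|hno].
  have hZ : forall z, z != 0 -> qf B z = 0 -> 0 < qf (-1 *: A) z.
    move=> z z0' bz; rewrite /qf bfZm mulN1r oppr_gt0 -/(qf A z).
    have := ncA z z0' bz; case: ltrgtP => // azp _.
    by exfalso; apply: (H3 n2 sA sB nc bz bz0 azp az0).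
  have [s hs] := calabi_core (sN _ sA) sB hZ (ex_intro _ u bu) (ex_intro _ w bw).
  by exists (-1), s.
have hZ : forall z, z != 0 -> qf B z = 0 -> 0 < qf A z.
  move=> z z0 bz; have := ncA z z0 bz; case: ltrgtP => // azn _.
  by exfalso; apply: hno; exists z.
have [s hs] := calabi_core sA sB hZ (ex_intro _ u bu) (ex_intro _ w bw).
by exists 1, s; rewrite scale1r.
Qed.

End Cal4.

Lemma mx11_eq0 (R : realType) (M : 'M[R]_1) : M 0 0 = 0 -> M = 0.
Proof. by move=> h; apply/matrixP => i j; rewrite !ord1 h mxE. Qed.

Theorem theorem4 (R : realType) (n k : nat) (A B : 'M[R]_n) (U : 'M[R]_(n, k)) :
  symmx A -> symmx B ->
  (forall v : 'cV[R]_n, (Qset A v /\ Qset B v) <-> (Nset A v /\ Nset B v)) ->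
  (\rank (NAB A B) + 3 <= n)%N ->
  (* the columns of U form a basis of the orthogonal complement of N(A) cap N(B) *)
  \rank U = k ->
  (forall w : 'cV[R]_n,
     (forall v : 'cV[R]_n, Nset A v -> Nset B v -> w^T *m v = 0) <->
     (exists c : 'cV[R]_k, w = U *m c)) ->
  (exists p : R * R, II_pd (U^T *m A *m U) (U^T *m B *m U) p) /\
  (exists p : R * R, II_psd A B p) /\
  sim_diag_congr A B.
Proof.
rewrite /symmx /Qset /Nset => sA sB hQ hr hU hO.
set N := NAB A B in hr.
have NP : forall u : 'rV[R]_n, (u <= N)%MS -> A *m u^T = 0 /\ B *m u^T = 0.
  move=> u; rewrite /N /NAB sub_capmx => /andP[/sub_kermxP h1 /sub_kermxP h2].
  split.
    by have := congr1 trmx h1; rewrite trmx_mul trmxK trmx0.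
  by have := congr1 trmx h2; rewrite trmx_mul trmxK trmx0.
have NP' : forall v : 'cV[R]_n, A *m v = 0 -> B *m v = 0 -> (v^T <= N)%MS.
  move=> v h1 h2; rewrite /N /NAB sub_capmx; apply/andP; split; apply/sub_kermxP.
    by rewrite -trmx_mul h1 trmx0.
  by rewrite -trmx_mul h2 trmx0.
have selforth : forall w : 'cV[R]_n, (exists c, w = U *m c) -> A *m w = 0 -> B *m w = 0 -> w = 0.
  move=> w hw h1 h2; have := (proj2 (hO w) hw) w h1 h2.
  by move=> h; apply: norm2_eq0; rewrite /bf mulmx1 h mxE.
have Ufree : row_free U^T by rewrite /row_free mxrank_tr hU.
have Uinj : forall c : 'cV[R]_k, U *m c = 0 -> c = 0.
  move=> c h; apply/trmx_inj; rewrite trmx0; apply/eqP.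
  by rewrite -(mulmx_free_eq0 _ Ufree) -trmx_mul h trmx0.
have rk : (n - \rank N <= k)%N.
  have e : (n - \rank N = \rank (kermx N^T))%N by rewrite mxrank_ker mxrank_tr.
  rewrite e -hU -(mxrank_tr U); apply: mxrankS; apply/row_subP => i.
  set u := row i (kermx N^T).
  have uN : u *m N^T = 0 by apply/sub_kermxP; exact: row_sub.
  have Nu : N *m u^T = 0 by rewrite -(trmxK N) -trmx_mul uN trmx0.
  have [c hc] : exists c, u^T = U *m c.
    apply/(hO u^T) => v h1 h2; have /submxP [d dE] := NP' v h1 h2.
    have : v^T *m u^T = 0 by rewrite dE -mulmxA Nu mulmx0.
    by move/(congr1 trmx); rewrite trmx_mul !trmxK trmx0.
  by apply/submxP; exists c^T; rewrite -trmx_mul -hc trmxK.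
have k3 : (2 < k)%N by lia.
pose A' := U^T *m A *m U; pose B' := U^T *m B *m U.
have sA' : A'^T = A' := sym_congr U sA.
have sB' : B'^T = B' := sym_congr U sB.
have ncr : forall c, qf A' c = 0 -> qf B' c = 0 -> c = 0.
  move=> c; rewrite /A' /B' !qf_congr => h1 h2; apply: Uinj.
  have [Aw Bw] := proj1 (hQ (U *m c)) (conj (mx11_eq0 h1) (mx11_eq0 h2)).
  by apply: selforth Aw Bw; exists c.
have [mu [sg hpd]] := calabi k3 sA' sB' ncr.
have dec : forall v : 'cV[R]_n, exists (a : 'cV[R]_k) (z : 'cV[R]_n),
    v = U *m a + z /\ A *m z = 0 /\ B *m z = 0.
  move=> v.
  have cap : forall u : 'rV[R]_n, (u <= U^T)%MS -> (u <= N)%MS -> u = 0.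
    move=> u /submxP [c cE] /NP [h1 h2]; apply/trmx_inj; rewrite trmx0.
    by apply: selforth h1 h2; exists c^T; rewrite cE trmx_mul trmxK.
  have rk2 : (n <= \rank U^T + \rank N)%N by rewrite mxrank_tr hU; lia.
  have [a [b vE]] := decomp rk2 cap v^T.
  exists a^T, (b *m N)^T; split; first by rewrite -[v]trmxK vE linearD /= trmx_mul trmxK.
  by apply: NP; exact: submxMl.
pose P := mu *: A + sg *: B.
have sP : P^T = P by rewrite sym_comb.
have PP : mu *: A' + sg *: B' = U^T *m P *m U by rewrite comb_congr.
have Pz : forall z : 'cV[R]_n, A *m z = 0 -> B *m z = 0 -> P *m z = 0.
  by move=> z h1 h2; rewrite mulmxDl -!scalemxAl h1 h2 !scaler0 addr0.
have qfE : forall (a : 'cV[R]_k) (z : 'cV[R]_n), A *m z = 0 -> B *m z = 0 -> qf P (U *m a + z) = qf (mu *: A' + sg *: B') a.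
  move=> a z h1 h2; rewrite qf_split // !bf_kerr ?Pz //.
  rewrite [qf P z]/qf bf_kerr ?Pz // mulr0 !addr0.
  by rewrite PP qf_congr.
have psd : forall v, 0 <= qf P v.
  move=> v; have [a [z [vE [h1 h2]]]] := dec v; rewrite vE qfE //.
  by case: (eqVneq a 0) => [->|a0]; [rewrite /qf bf0l | exact/ltW/hpd].
have hker : forall x, qf P x = 0 -> A *m x = 0 /\ B *m x = 0.
  move=> x; have [a [z [xE [h1 h2]]]] := dec x; rewrite xE qfE //.
  case: (eqVneq a 0) => [->|a0]; last by move=> h; have := hpd a a0; rewrite h ltxx.
  by rewrite mulmx0 add0r.
split.
  exists (mu, sg); split; first by rewrite sym_comb.
  exact: hpd.
split.
  by exists (mu, sg); split.
have gG : goodG A B by exists mu, sg; split.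
have [C [Cu [dA dB]]] := SD_good sA sB gG.
by exists C.
Qed.
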